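(* Let $n$ be a positive integer with at least two distinct prime factors, let $q_1$ be the largest prime smaller than $n$, and write $n=\prod_i p_i^{e_i}$; let $p_1^{a_1}$ be the largest and $p_2^{a_2}$ the second largest of the prime powers $p_i^{e_i}$ in this factorization ($p_1\neq p_2$). If $p_1^{a_1}p_2^{a_2}>n-q_1$, then $n$ satisfies the 3-variation of Condition 1 with $p_1$, $p_2$ and $q_1$.
   Context: A positive integer $n$ satisfies the $N$-variation of Condition 1 with primes $p_1,\dots,p_N$ if these are $N$ different primes and for every $1\le k\le n-1$, $\binom{n}{k}$ is divisible by at least one of $p_1,\dots,p_N$. Here ''largest prime-power divisor'' and ''second largest prime-power divisor'' refer to the maximal prime powers $p_i^{e_i}$ exactly dividing $n$. *)

(* Defs.v *)
From mathcomp Require Import all_boot.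
Set Implicit Arguments. Unset Strict Implicit. Unset Printing Implicit Defensive.

Definition condition1_var (n : nat) (ps : seq nat) : Prop :=
  uniq ps /\ all prime ps /\
  (forall k, 1 <= k <= n - 1 -> exists2 p, p \in ps & p %| 'C(n, k)).

Definition ppart (p n : nat) : nat := p ^ logn p n.

(* Main.v *)
Require Import Defs.
From mathcomp Require Import all_boot.
From mathcomp Require Import zify ring.
Set Implicit Arguments. Unset Strict Implicit. Unset Printing Implicit Defensive.

Lemma prime_dvd_fact p m : prime p -> (p %| m`!) = (p <= m).
Proof.
move=> pp; elim: m => [|m IH]; first by rewrite fact0 dvdn1; case: p pp => [|[|]].
rewrite factS Euclid_dvdM // IH; apply/idP/idP.
  by case/orP => [/dvdn_leq -> //|/leqW].
by rewrite leq_eqVlt ltnS => /orP[/eqP->|->]; rewrite ?dvdnn ?orbT.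
Qed.

Lemma central_lb n : 0 < n -> 4 ^ n <= 2 * n * 'C(2 * n, n).
Proof.
elim: n => // n IH _.
case: n IH => [|n] IH; first by [].
have IH' := IH isT.
set N := n.+1 in IH' *.
have h1 := mul_bin_diag (2 * N).+2 N.
have h2 := mul_bin_diag (2 * N).+1 N.
rewrite /= in h1 h2.
have e3 : 'C((2 * N).+1, N.+1) = 'C((2 * N).+1, N).
  by rewrite -bin_sub; [congr 'C(_, _); lia | lia].
rewrite e3 in h2.
have e4 : 2 * N.+1 = (2 * N).+2 by lia.
rewrite e4.
have e5 : N.+1 * 'C((2 * N).+2, N.+1) = 2 * (2 * N).+1 * 'C(2 * N, N).
  apply/eqP; rewrite -(eqn_pmul2l (ltn0Sn N)); apply/eqP.
  move: h1 h2; set X := 'C(_, N); set Y := 'C(_, N.+1); set Z := 'C(2 * N, N).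
  move=> h1 h2.
  have -> : N.+1 * (N.+1 * Y) = (2 * N).+2 * (N.+1 * X) by rewrite -h1; ring.
  rewrite -h2; ring.
rewrite expnS.
have : (2 * N).+2 * 'C((2 * N).+2, N.+1) = 2 * (2 * (2 * N).+1 * 'C(2 * N, N)) by rewrite -e5; lia.
move=> ->.
nia.
Qed.

Lemma odd_ub k : 'C((2 * k).+1, k) <= 4 ^ k.
Proof.
elim: k => [|k IH]; first by [].
have h1 := mul_bin_diag (2 * k).+3 k.
have h2 := mul_bin_down (2 * k).+2 k.
rewrite /= in h1 h2.
have e4 : (2 * k.+1).+1 = (2 * k).+3 by lia.
rewrite e4.
have e5 : (k.+1 * k.+2) * 'C((2 * k).+3, k.+1) = ((2 * k).+3 * (2 * k).+2) * 'C((2 * k).+1, k).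
  have e6 : (2 * k).+2 - k = k.+2 by lia.
  rewrite e6 in h2.
  move: h1 h2; set X := 'C((2 * k).+2, k); set Y := 'C(_, k.+1); set Z := 'C(_, k).
  move=> h1 h2.
  have -> : k.+1 * k.+2 * Y = k.+2 * ((2 * k).+3 * X) by rewrite h1; ring.
  have -> : k.+2 * ((2 * k).+3 * X) = (2 * k).+3 * (k.+2 * X) by ring.
  rewrite -h2; ring.
have : (k.+1 * k.+2) * 'C((2 * k).+3, k.+1) <= (k.+1 * k.+2) * 4 ^ k.+1.
  rewrite e5 expnS; nia.
by rewrite leq_pmul2l ?muln_gt0.
Qed.


Lemma coprime_prodl_nat a b (P : pred nat) (F : nat -> nat) M :
  (forall i, a <= i < b -> P i -> coprime (F i) M) -> coprime (\prod_(a <= i < b | P i) F i) M.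
Proof.
move=> h; rewrite big_nat_cond; apply: (big_ind (fun x => coprime x M)).
- exact: coprime1n.
- by move=> x y hx hy; rewrite coprimeMl hx hy.
- by move=> i /andP[hi hp]; apply: h.
Qed.

Lemma subprod_dvd a b (P : pred nat) :
  \prod_(a <= i < b | P i) i %| \prod_(a <= i < b) i.
Proof.
rewrite big_mkcond /=.
apply: (big_ind2 (fun x y => x %| y)) => //; first by move=> *; apply: dvdn_mul.
by move=> i _; case: (P i) => //; apply: dvd1n.
Qed.

Lemma primorial x : \prod_(0 <= p < x.+1 | prime p) p <= 4 ^ x.
Proof.
elim: x {-2}x (leqnn x) => [|y IH] x hx.
  by move: hx; rewrite leqn0 => /eqP ->; rewrite unlock.
case: (ltnP x 3) => [x3|x3].
  by case: x hx x3 => [|[|[|]]] //; rewrite unlock.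
case/boolP: (odd x) => ox.
  have [k ek] : exists k, x = (2 * k).+1.
    by exists x./2; rewrite -{1}(odd_double_half x) ox /=; lia.
  have k1 : 1 <= k by lia.
  rewrite (@big_cat_nat _ _ _ k.+2) //=; last by lia.
  have A : \prod_(0 <= p < k.+2 | prime p) p <= 4 ^ k.+1 by apply: IH; lia.
  have B : \prod_(k.+2 <= p < x.+1 | prime p) p <= 4 ^ k.
    apply: leq_trans (odd_ub k); rewrite -ek.
    apply: dvdn_leq; first by rewrite bin_gt0; lia.
    have := bin_fact (_ : k <= x); rewrite (_ : x - k = k.+1); last by lia.
    move=> /(_ ltac:(lia)) E.
    rewrite -(@Gauss_dvdl _ _ (k`! * k.+1`!)); last first.
      apply: coprime_prodl_nat => p /andP[p1 p2] pp.
      rewrite prime_coprime // Euclid_dvdM // !prime_dvd_fact // negb_or -!ltnNge.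
      by rewrite p1 andbT; apply: ltnW.
    rewrite E (fact_split (_ : k.+1 <= x)); last by lia.
    by apply: dvdn_mull; apply: subprod_dvd.
  have -> : 4 ^ x = 4 ^ k.+1 * 4 ^ k by rewrite -expnD; congr (_ ^ _); lia.
  exact: leq_mul.
have [j ej] : exists j, x = (2 * j).+2.
  by exists (x./2.-1); rewrite -{1}(odd_double_half x) (negbTE ox) /=; lia.
rewrite big_mkcond big_nat_recr //= -big_mkcond /=.
have -> : prime x = false.
  apply/negP => px.
  have : 2 %| x by rewrite ej (_ : (2 * j).+2 = 2 * j.+1) ?dvdn_mulr //; lia.
  rewrite dvdn_prime2 // => /eqP e2; lia.
have := IH x.-1 ltac:(lia); rewrite (_ : x.-1.+1 = x); last by lia.
move=> h; rewrite muln1 (leq_trans h) // leq_pexp2l //; lia.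
Qed.


Lemma term_le1 n d : 0 < d -> 2 * n %/ d - 2 * (n %/ d) <= 1.
Proof.
move=> d0; have h : 2 * n %/ d < (2 * (n %/ d)).+2.
  rewrite ltn_divLR //; have := ltn_ceil n d0; nia.
lia.
Qed.

Lemma term_ge n d : 0 < d -> 2 * (n %/ d) <= 2 * n %/ d.
Proof.
move=> d0; rewrite leq_divRL //; have := leq_divM n d; nia.
Qed.

Lemma logn_central p n : prime p ->
  logn p 'C(2 * n, n) = \sum_(1 <= k < (2 * n).+1) (2 * n %/ p ^ k - 2 * (n %/ p ^ k)).
Proof.
move=> pp.
have p1 := prime_gt1 pp.
have E := bin_fact (_ : n <= 2 * n); rewrite (_ : 2 * n - n = n) in E; last by lia.
have := E ltac:(lia) => {}E.
have L : logn p (2 * n)`! = logn p 'C(2 * n, n) + (logn p n`! + logn p n`!).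
  by rewrite -E !lognM ?muln_gt0 ?fact_gt0 ?bin_gt0 //; lia.
rewrite !logn_fact // in L.
have W : \sum_(1 <= k < n.+1) n %/ p ^ k = \sum_(1 <= k < (2 * n).+1) n %/ p ^ k.
  rewrite (@big_cat_nat _ _ _ n.+1 1 (2 * n).+1) //=; last by lia.
  rewrite [X in _ = _ + X]big1_seq ?addn0 // => k /andP[_].
  rewrite mem_index_iota => /andP[hk _]; apply: divn_small.
  by apply: leq_trans hk (ltnW (ltn_expl k p1)).
rewrite W in L.
have S : \sum_(1 <= k < (2 * n).+1) 2 * n %/ p ^ k =
   \sum_(1 <= k < (2 * n).+1) (2 * n %/ p ^ k - 2 * (n %/ p ^ k)) +
   2 * \sum_(1 <= k < (2 * n).+1) n %/ p ^ k.
  rewrite big_distrr /= -big_split /=; apply: eq_bigr => k _.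
  by rewrite subnK // term_ge // expn_gt0 ltnW.
lia.
Qed.

Lemma sum_le1 (T : nat -> nat) M : (forall k, T k <= 1) ->
  \sum_(1 <= k < M) T k <= M.-1.
Proof.
move=> h; apply: (@leq_trans (\sum_(1 <= k < M) 1)); first by apply: leq_sum.
by rewrite sum_nat_const_nat; lia.
Qed.

Lemma pow_sum_bound p X M (T : nat -> nat) : 1 < p -> 0 < X ->
  (forall k, T k <= 1) -> (forall k, X < p ^ k -> T k = 0) ->
  p ^ (\sum_(1 <= k < M) T k) <= X.
Proof.
move=> p1 X0 h1 h0; elim: M => [|M IH]; first by rewrite big_geq.
case: M IH => [|M] IH; first by rewrite big_geq.
rewrite big_nat_recr //=.
case: (leqP (p ^ M.+1) X) => hM.
  have := sum_le1 M.+1 h1 => /= hs.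
  apply: leq_trans hM; rewrite leq_pexp2l ?(ltnW p1) //; have := h1 M.+1; lia.
by rewrite h0 // addn0.
Qed.

Lemma central_pp p n : prime p -> 0 < n -> p ^ logn p 'C(2 * n, n) <= 2 * n.
Proof.
move=> pp n0; rewrite logn_central //; apply: pow_sum_bound; rewrite ?prime_gt1 //; first lia.
  by move=> k; rewrite term_le1 // expn_gt0 prime_gt0.
move=> k hk; rewrite divn_small //; lia.
Qed.


Lemma central_le1 p n : prime p -> 0 < n -> 2 * n < p * p -> logn p 'C(2 * n, n) <= 1.
Proof.
move=> pp n0 h; have := central_pp pp n0 => h2.
have : p ^ logn p 'C(2 * n, n) < p ^ 2 by rewrite expnS expn1; lia.
by rewrite ltn_exp2l ?prime_gt1.
Qed.

Lemma central_zero p n : prime p -> 2 * n < p * p -> 2 * n < 3 * p -> p <= n ->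
  logn p 'C(2 * n, n) = 0.
Proof.
move=> pp h1 h2 h3; have p0 := prime_gt0 pp.
rewrite logn_central //; apply: big1_seq => k /andP[_].
rewrite mem_index_iota => /andP[k1 _].
case: k k1 => // [[|k]] _.
  have a : 2 * n %/ p ^ 1 = 2.
    apply/eqP; rewrite eqn_leq -ltnS ltn_divLR ?leq_divRL ?expn_gt0 ?p0 // expn1; lia.
  have b : n %/ p ^ 1 = 1.
    apply/eqP; rewrite eqn_leq -ltnS ltn_divLR ?leq_divRL ?expn_gt0 ?p0 // expn1; lia.
  by rewrite a b.
rewrite divn_small // (leq_trans h1) // (_ : p * p = p ^ 2); last by rewrite expnS expn1.
by rewrite leq_pexp2l.
Qed.

Lemma decomp n : 0 < n ->
  'C(2 * n, n) = \prod_(0 <= p < (2 * n).+1) p ^ logn p 'C(2 * n, n).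
Proof.
move=> n0; set C := 'C(2 * n, n).
have C0 : 0 < C by rewrite bin_gt0; lia.
rewrite -{1}(partnT C0) (@widen_partn (C + 2 * n)) ?leq_addr //.
rewrite (@big_cat_nat _ _ _ (2 * n).+1) //=; last by lia.
rewrite [X in _ * X]big1_seq ?muln1; last first.
  move=> p /andP[_]; rewrite mem_index_iota => /andP[hp _].
  case/boolP: (prime p) => pp; last by rewrite lognE (negbTE pp).
  rewrite logn_coprime // prime_coprime //; apply/negP => hd.
  have E := bin_fact (_ : n <= 2 * n); rewrite (_ : 2 * n - n = n) in E; last by lia.
  have := E ltac:(lia) => {}E.
  have : p %| (2 * n)`! by rewrite -E dvdn_mulr.
  by rewrite prime_dvd_fact // leqNgt hp.
by apply: eq_bigl.
Qed.


Lemma central_ub n m : 0 < n -> m * m <= 2 * n < m.+1 * m.+1 ->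
  (forall p, prime p -> n < p <= 2 * n -> False) ->
  'C(2 * n, n) <= (2 * n) ^ m.+1 * 4 ^ (2 * n %/ 3).
Proof.
move=> n0 /andP[hm1 hm2] nop.
set N := 2 * n %/ 3.
rewrite decomp //.
apply: (@leq_trans (\prod_(0 <= p < (2 * n).+1)
   ((if p * p <= 2 * n then 2 * n else 1) * (if prime p && (p <= N) then p else 1)))).
  rewrite !big_seq; apply: leq_prod => p; rewrite mem_index_iota => /andP[_ hpr].
  have g1 : 0 < (if p * p <= 2 * n then 2 * n else 1) by case: ifP => _ //; lia.
  case/boolP: (prime p) => pp; last first.
    by rewrite lognE (negbTE pp) /= muln1.
  have g2 : 0 < (if prime p && (p <= N) then p else 1) by case: ifP => _ //; apply: prime_gt0.
  case: (leqP (p * p) (2 * n)) => hp.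
    apply: leq_trans (central_pp pp n0) _.
    by rewrite /= leq_pmulr //; case: ifP => _ //; exact: prime_gt0.
  have l1 := central_le1 pp n0 hp.
  rewrite mul1n /=; case: (leqP p N) => hN.
    by apply: leq_trans (_ : p ^ 1 <= p) => //; rewrite leq_pexp2l ?prime_gt0.
  have h3 : 2 * n < 3 * p by move: hN; rewrite /N ltn_divLR //; lia.
  case: (leqP p n) => hpn; first by rewrite central_zero.
  by case: (nop p pp); rewrite hpn -ltnS hpr.
rewrite big_split /=; apply: leq_mul.
  rewrite (@big_cat_nat _ _ _ m.+1) //=; last by nia.
  rewrite [X in _ * X]big1_seq ?muln1; last first.
    move=> p /andP[_]; rewrite mem_index_iota => /andP[hp _].
    case: ifP => // h; exfalso; nia.
  apply: (@leq_trans (\prod_(0 <= p < m.+1) (2 * n))); last by rewrite prod_nat_const_nat subn0.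
  by apply: leq_prod => p _; case: ifP => _ //; lia.
rewrite (@big_cat_nat _ _ _ N.+1) //=; last by rewrite /N; apply: leq_trans (leq_div _ _) _; lia.
rewrite [X in _ * X]big1_seq ?muln1; last first.
  move=> p /andP[_]; rewrite mem_index_iota => /andP[hp _].
  by case: ifP => // /andP[_ h]; exfalso; lia.
apply: leq_trans (primorial N).
rewrite [X in _ <= X]big_mkcond /= big_nat_cond [X in _ <= X]big_nat_cond.
apply: leq_prod => p /andP[/andP[_ hp] _].
by rewrite ltnS in hp; rewrite hp andbT.
Qed.


Definition chain := [:: 2;3;5;7;13;23;43;83;163;317;631;1259].
Lemma chain_prime : all prime chain.
Proof. by vm_compute. Qed.
Lemma chain_cover : all (fun n => has (fun p => n < p <= 2 * n) chain) (iota 1 1258).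
Proof. by vm_compute. Qed.

Lemma isqrt_ex X : exists m, m * m <= X < m.+1 * m.+1.
Proof.
elim: X => [|X [m /andP[h1 h2]]]; first by exists 0.
case: (ltnP X.+1 (m.+1 * m.+1)) => h.
  by exists m; rewrite h andbT; lia.
by exists m.+1; apply/andP; split; nia.
Qed.

Lemma base6 a k : a ^ 2 <= 2 ^ 11 -> 33 <= k -> a ^ 6 <= 2 ^ k.
Proof.
move=> h hk.
have e : a ^ 6 = (a ^ 2) ^ 3 by rewrite -expnM.
have e2 : (2 ^ 11) ^ 3 = 2 ^ 33 by rewrite -expnM.
rewrite e; apply: leq_trans (_ : (2 ^ 11) ^ 3 <= _); first by rewrite leq_exp2r.
by rewrite e2 leq_pexp2l.
Qed.

Lemma pow6 m : 40 <= m -> m.+1 ^ 6 <= 2 ^ (m - 2).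
Proof.
elim: m => // m IH h.
case: (ltnP m 40) => hm.
  have -> : m = 39 by lia.
  by apply: base6.
have IH' := IH hm.
have h4 : 4 * (m.+2 ^ 2) <= 5 * (m.+1 ^ 2) by rewrite !expnS !expn0; nia.
have h5 : (4 * (m.+2 ^ 2)) ^ 3 <= (5 * (m.+1 ^ 2)) ^ 3 by rewrite leq_exp2r.
have e1 : (4 * (m.+2 ^ 2)) ^ 3 = 64 * m.+2 ^ 6 by rewrite expnMn -expnM.
have e2 : (5 * (m.+1 ^ 2)) ^ 3 = 125 * m.+1 ^ 6 by rewrite expnMn -expnM.
rewrite e1 e2 in h5.
have e3 : 2 ^ (m.+1 - 2) = 2 * 2 ^ (m - 2) by rewrite -expnS; congr (_ ^ _); lia.
rewrite e3.
move: h5 IH'; set A := m.+2 ^ 6; set B := m.+1 ^ 6; set D := 2 ^ (m - 2); lia.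
Qed.

Lemma big_case n : 1259 <= n -> exists2 p, prime p & n < p <= 2 * n.
Proof.
move=> hn.
case: (boolP (has (fun p => prime p && (n < p)) (iota 0 (2 * n).+1))).
  case/hasP => p; rewrite mem_iota => /andP[_ hp] /andP[pp np].
  by exists p => //; rewrite np; lia.
move/hasPn => nf.
have nop : forall p, prime p -> n < p <= 2 * n -> False.
  move=> p pp /andP[h1 h2].
  have := nf p; rewrite mem_iota pp h1 /= => /(_ ltac:(lia)) //.
have [m hm] := isqrt_ex (2 * n).
have m40 : 40 <= m by case/andP: hm => _ h; nia.
have n0 : 0 < n by lia.
have lb := central_lb n0.
have ub := central_ub n0 hm nop.
set N := 2 * n %/ 3 in ub.
set C := 'C(2 * n, n) in lb ub.
have h1 : 4 ^ n <= (2 * n) ^ (m.+2) * 4 ^ N.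
  apply: leq_trans lb _; rewrite expnS -[X in _ <= X]mulnA; exact: leq_mul (leqnn _) ub.
have NN : 3 * N <= 2 * n by rewrite /N; lia.
have e : 4 ^ n = 4 ^ (n - N) * 4 ^ N by rewrite -expnD subnK //; lia.
rewrite e leq_pmul2r ?expn_gt0 // in h1.
have a : 4 ^ n <= (2 * n) ^ (3 * m.+2).
  apply: leq_trans (_ : 4 ^ (3 * (n - N)) <= _).
    by rewrite leq_pexp2l //; lia.
  by rewrite !(mulnC 3) !expnM leq_exp2r.
have b : (2 * n) ^ (3 * m.+2) < (m.+1 ^ 6) ^ m.+2.
  rewrite -expnM (_ : 6 * m.+2 = 2 * (3 * m.+2)); last by lia.
  rewrite [X in _ < X]expnM ltn_exp2r; last by lia.
  by rewrite expnS expn1; case/andP: hm.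
have c : (m.+1 ^ 6) ^ m.+2 <= (2 ^ (m - 2)) ^ m.+2 by rewrite leq_exp2r // pow6.
have d : (2 ^ (m - 2)) ^ m.+2 <= 4 ^ n.
  rewrite -expnM (_ : 4 = 2 ^ 2) // -expnM leq_pexp2l //.
  case/andP: hm => hm1 _; nia.
have := leq_ltn_trans a (leq_trans b (leq_trans c d)).
by rewrite ltnn.
Qed.

Lemma bertrand n : 0 < n -> exists2 p, prime p & n < p <= 2 * n.
Proof.
move=> n0; case: (ltnP n 1259) => hn; last exact: big_case.
have : n \in iota 1 1258 by rewrite mem_iota; lia.
move/(allP chain_cover) => /hasP[p pc hp].
by exists p => //; apply: (allP chain_prime).
Qed.

Lemma ppart_dvd_k p n k : prime p -> 0 < k <= n -> ~~ (p %| 'C(n, k)) ->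
  p ^ logn p n %| k.
Proof.
move=> pp /andP[k0 kn] ndv.
have n0 : 0 < n by apply: leq_trans kn.
rewrite pfactor_dvdn //.
case: k k0 kn ndv => // m _ kn ndv.
have := mul_bin_diag n m.
move=> E.
have c1 : 0 < 'C(n, m.+1) by rewrite bin_gt0.
have c2 : 0 < 'C(n.-1, m) by rewrite bin_gt0; lia.
have : logn p (n * 'C(n.-1, m)) = logn p (m.+1 * 'C(n, m.+1)) by rewrite E.
rewrite !lognM // (logn_coprime (m := 'C(n, m.+1))); last by rewrite prime_coprime.
lia.
Qed.

Lemma bertrand_weak q : prime q -> exists2 r, prime r & q < r <= q.*2.
Proof. by move=> pq; rewrite -mul2n; apply: bertrand; apply: prime_gt0. Qed.

Theorem mainTheorem13 (n q1 p1 p2 : nat) :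
  0 < n ->
  1 < size (primes n) ->
  (* q1 is the largest prime smaller than n *)
  prime q1 -> q1 < n -> (forall q, prime q -> q < n -> q <= q1) ->
  (* p1^a1 is the largest prime-power divisor of n *)
  prime p1 -> p1 %| n ->
  (forall p, prime p -> p %| n -> ppart p n <= ppart p1 n) ->
  (* p2^a2 is the second largest prime-power divisor of n *)
  prime p2 -> p2 %| n -> p2 != p1 ->
  (forall p, prime p -> p %| n -> p != p1 -> ppart p n <= ppart p2 n) ->
  n - q1 < ppart p1 n * ppart p2 n ->
  condition1_var n [:: p1; p2; q1].
Proof.
move=> n0 _ pq1 q1n q1max pp1 p1n _ pp2 p2n p21 _ hP.
have nq : ~~ (q1 %| n).
  apply/negP => /dvdnP[c ec].
  have c2 : 2 <= c.
    case: c ec => [|[|c]] ec; [by rewrite ec in n0| by rewrite ec mul1n ltnn in q1n|by []].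
  have [r pr /andP[lr ur]] := bertrand_weak pq1.
  have rn : r <= n by rewrite ec; apply: leq_trans ur _; rewrite -mul2n leq_mul2r c2 orbT.
  have : r < n.
    rewrite ltn_neqAle rn andbT; apply/negP => /eqP er.
    have : q1 %| r by rewrite er ec dvdn_mull.
    rewrite dvdn_prime2 // => /eqP eqr; by rewrite eqr ltnn in lr.
  move/(q1max _ pr); lia.
split.
  have e1 : q1 != p1 by apply/eqP=> e; rewrite -e in p1n; rewrite p1n in nq.
  have e2 : q1 != p2 by apply/eqP=> e; rewrite -e in p2n; rewrite p2n in nq.
  by rewrite /= !inE negb_or eq_sym p21 eq_sym e1 eq_sym e2.
split; first by rewrite /= pp1 pp2 pq1.
move=> k /andP[k1 kn].
have cop : coprime (p1 ^ logn p1 n) (p2 ^ logn p2 n).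
  apply: coprimeXl; apply: coprimeXr; rewrite prime_coprime // dvdn_prime2 //.
  by rewrite eq_sym.
have key : forall j, 0 < j < n -> ~~ (p1 %| 'C(n, j)) -> ~~ (p2 %| 'C(n, j)) ->
   ppart p1 n * ppart p2 n <= j.
  move=> j /andP[j0 jn] h1 h2; apply: dvdn_leq => //.
  rewrite Gauss_dvd // !ppart_dvd_k //; lia.
case h1: (p1 %| 'C(n, k)); first by exists p1; rewrite ?inE ?eqxx.
case h2: (p2 %| 'C(n, k)); first by exists p2; rewrite ?inE ?eqxx ?orbT.
exists q1; first by rewrite !inE eqxx !orbT.
have kk : 0 < k < n by move: k1 kn n0; clear; lia.
have a1 := key k kk (negbT h1) (negbT h2).
have a2 : ppart p1 n * ppart p2 n <= n - k.
  apply: key; first by move: k1 kn n0; clear; lia.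
  - by rewrite bin_sub ?h1 //; move: kn; clear; lia.
  - by rewrite bin_sub ?h2 //; move: kn; clear; lia.
move: a1 a2 hP; set P := ppart p1 n * ppart p2 n => a1 a2 hP.
have kq : k < q1 by move: a1 a2 hP kn q1n; clear; lia.
have nkq : n - k < q1 by move: a1 a2 hP kn q1n; clear; lia.
have kn' : k <= n by move: kn; clear; lia.
have := bin_fact kn'.
move=> E.
have : q1 %| n`! by rewrite prime_dvd_fact // ltnW.
rewrite -E !Euclid_dvdM // !prime_dvd_fact //.
have -> : (q1 <= k) = false by apply/negbTE; rewrite -ltnNge.
have -> : (q1 <= n - k) = false by apply/negbTE; rewrite -ltnNge.
by rewrite !orbF.
Qed.
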